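(* Let $q$ be a prime power and let $\{P_i\}$ be an infinite family of toric codes over $\mathbb{F}_q$, with $P_i\subseteq[0,q-2]^{n_i}$. If the sequence $\{M(P_i)\}$ is unbounded, then $\delta(P_i)\to0$ as $i\to\infty$.
   Context: For an integral convex polytope $P\subseteq[0,q-2]^n$: $\mathcal{L}_P=\mathrm{span}_{\mathbb{F}_q}\{x^p: p\in P\cap\mathbb{Z}^n\}$, $N(P)=\max_{0\neq f\in\mathcal{L}_P}|Z(f)|$ with $Z(f)$ the zero set of $f$ in $(\mathbb{F}_q^\times)^n$, $\delta(P)=\big((q-1)^n-N(P)\big)/(q-1)^n$, and $R(P)=|P\cap\mathbb{Z}^n|/(q-1)^n$. A sequence of nonempty integral convex polytopes $P_i\subseteq[0,q-2]^{n_i}$ is an infinite family of toric codes if $n_i\to\infty$ and $\delta(P_i)\to\delta$, $R(P_i)\to R$ for some $\delta,R\in[0,1]$. $M(P)$ denotes the largest integer $i\ge0$ such that there is a unimodular affine transformation $A$ (a map $x\mapsto Mx+\lambda$ with $M\in GL(n,\mathbb{Z})$, $\lambda\in\mathbb{Z}^n$) with $A([0,1]^i\times\{0\}^{n-i})\subseteq P$. *)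

(* Defs.v *)
From HB Require Import structures.
From mathcomp Require Import all_boot all_order all_algebra.
From mathcomp Require Import boolp classical_sets reals topology normedtype sequences.
Set Implicit Arguments. Unset Strict Implicit. Unset Printing Implicit Defensive.
Import Order.TTheory GRing.Theory Num.Theory.
Import numFieldNormedType.Exports.
Local Open Scope classical_set_scope.
Local Open Scope ring_scope.

(* Integral convex polytopes in R^n, given as the convex hull of a finite
   list of integer points (its generating vertices). *)
Record ipolytope (n : nat) := IPolytope { verts : seq 'rV[int]_n }.

Section Toric.
Variable R : realType.

Definition conv_hull (n : nat) (V : seq 'rV[R]_n) (x : 'rV[R]_n) : Prop :=
  exists w : 'I_(size V) -> R,
    [/\ forall j, 0 <= w j, \sum_j w j = 1 & x = \sum_j w j *: V`_j].

Definition intvR (n : nat) (v : 'rV[int]_n) : 'rV[R]_n := map_mx (fun z : int => z%:~R) v.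
Definition intmR (n : nat) (M : 'M[int]_n) : 'M[R]_n := map_mx (fun z : int => z%:~R) M.

Definition inP (n : nat) (P : ipolytope n) (x : 'rV[R]_n) : Prop :=
  conv_hull (map (@intvR n) (verts P)) x.

Definition in_box (q : nat) (n : nat) (P : ipolytope n) : Prop :=
  verts P != [::] /\
  forall v, v \in verts P -> forall j : 'I_n, (0 <= v ord0 j <= q%:Z - 2)%R.

(* M(P): A([0,1]^i x {0}^(n-i)) is contained in P for some unimodular
   affine map A x = x *m M + lam (row-vector convention), M in GL(n,Z). *)
Definition hasCube (n : nat) (P : ipolytope n) (i : nat) : Prop :=
  (i <= n)%N /\
  exists (M : 'M[int]_n) (lam : 'rV[int]_n),
    M \in unitmx /\
    forall x : 'rV[R]_n,
      (forall j, 0 <= x ord0 j <= 1) ->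
      (forall j : 'I_n, (i <= j)%N -> x ord0 j = 0) ->
      inP P (x *m intmR M + intvR lam).

Definition Mdim (n : nat) (P : ipolytope n) : nat :=
  \max_(i < n.+1 | `[< hasCube P i >]) i.

Section Code.
Variable F : finFieldType.
Local Notation q := #|F|.

Definition expR (n : nat) (e : 'rV['I_q.-1]_n) : 'rV[R]_n :=
  map_mx (fun k : 'I_q.-1 => (k : nat)%:R) e.

(* P ∩ Z^n (all of it lies in [0,q-2]^n when P does) *)
Definition latpts (n : nat) (P : ipolytope n) : {set 'rV['I_q.-1]_n} :=
  [set e | `[< inP P (expR e) >]].

(* An element f = sum_p c_p x^p of L_P is given by its coefficient function c
   supported on P ∩ Z^n; f <> 0 iff c <> 0 (monomials are independent). *)
Definition inLP (n : nat) (P : ipolytope n) (c : {ffun 'rV['I_q.-1]_n -> F}) : bool :=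
  [forall e, (e \notin latpts P) ==> (c e == 0)].

Definition evalc (n : nat) (P : ipolytope n) (c : {ffun 'rV['I_q.-1]_n -> F})
  (t : 'rV[F]_n) : F :=
  \sum_(e in latpts P) c e * \prod_(j < n) t ord0 j ^+ (e ord0 j : nat).

Definition Zcount (n : nat) (P : ipolytope n) (c : {ffun 'rV['I_q.-1]_n -> F}) : nat :=
  #|[set t : 'rV[F]_n | [forall j, t ord0 j != 0] & evalc P c t == 0]|.

Definition Nmax (n : nat) (P : ipolytope n) : nat :=
  \max_(c : {ffun 'rV['I_q.-1]_n -> F} | inLP P c && (c != 0)) Zcount P c.

Definition delta (n : nat) (P : ipolytope n) : R :=
  (((q.-1) ^ n)%:R - (Nmax P)%:R) / ((q.-1) ^ n)%:R.

Definition rate (n : nat) (P : ipolytope n) : R :=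
  (#|latpts P|)%:R / ((q.-1) ^ n)%:R.

Definition toricFamily (n : nat -> nat) (P : forall i, ipolytope (n i)) : Prop :=
  [/\ forall i, in_box q (P i),
      forall K : nat, exists i0 : nat, forall i, (i0 <= i)%N -> (K <= n i)%N &
      exists d r : R, [/\ 0 <= d <= 1, 0 <= r <= 1,
        (fun i => delta (P i)) @ \oo --> d &
        (fun i => rate (P i)) @ \oo --> r]].

End Code.
End Toric.

(* Main.v *)
Require Import Defs.
From HB Require Import structures.
From mathcomp Require Import all_boot all_order all_algebra.
From mathcomp Require Import boolp classical_sets reals topology normedtype sequences.
From mathcomp Require Import zify ring lra.
Import Order.TTheory GRing.Theory Num.Theory.
Import numFieldNormedType.Exports.
Local Open Scope ring_scope.

Lemma card_rowbox (F : finType) n (S : 'I_n -> pred F) :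
  #|[set t : 'rV[F]_n | [forall j, t ord0 j \in S j]]| = (\prod_(j < n) #|S j|)%N.
Proof.
pose g (t : 'rV[F]_n) : {ffun 'I_n -> F} := [ffun j => t ord0 j].
have ginj : injective g.
  move=> t1 t2 /ffunP h; apply/rowP => j; have := h j; rewrite !ffunE.
  by rewrite !(ord1 ord0).
rewrite -(card_imset _ ginj).
have -> : g @: [set t : 'rV[F]_n | [forall j, t ord0 j \in S j]] = [set f in family S].
  apply/finset.setP => f; rewrite inE; apply/imsetP/idP.
    move=> [t]; rewrite inE => /forallP ht ->; apply/familyP => j; rewrite ffunE; exact: ht.
  move=> /familyP hf; exists (\row_j f j).
    by rewrite inE; apply/forallP => j; rewrite mxE.
  by apply/ffunP => j; rewrite ffunE mxE.
rewrite cardsE card_family.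
rewrite /image_mem foldr_map -big_enum /=.
by elim: (enum _) => [|x s IH]; rewrite ?big_nil ?big_cons /= ?IH.
Qed.

Lemma prod_if n k a b :
  (\prod_(j < n) (if (j < k)%N then a else b) = a ^ (minn k n) * b ^ (n - k))%N.
Proof.
elim: n => [|n IH]; first by rewrite big_ord0 minn0 sub0n.
rewrite big_ord_recr /= IH.
case: (ltnP n k) => h.
  have -> : (n.+1 - k = 0)%N by apply/eqP; rewrite subn_eq0.
  have -> : (n - k = 0)%N by apply/eqP; rewrite subn_eq0 ltnW.
  have -> : minn k (n.+1) = n.+1 by apply/minn_idPr.
  by rewrite expnS !muln1 mulnC.
have -> : minn k (n.+1) = k by apply/minn_idPl; exact: leqW.
by rewrite subSn // expnS; ring.
Qed.

Section Count.
Variable F : finFieldType.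
Local Notation q := #|F|.

Lemma card_nz : #|[pred y : F | y != 0]| = q.-1.
Proof. by rewrite -(cardC1 (0:F)); apply: eq_card => y; rewrite !inE. Qed.

Lemma card_nz1 : #|[pred y : F | (y != 0) && (y != 1)]| = (q - 2)%N.
Proof.
have h1 := cardD1 (0:F) F.
have h2 := cardD1 (1:F) [predD1 F & 0].
rewrite !inE oner_neq0 /= in h1 h2.
have -> : #|[pred y : F | (y != 0) && (y != 1)]| = #|[predD1 [predD1 F & 0] & 1]|.
  by apply: eq_card => y; rewrite !inE andbT andbC.
rewrite h1 h2 add1n add1n subSS subSS subn0 //.
Qed.

Lemma q_gt1 : (1 < q)%N.
Proof. by rewrite (cardD1 (0:F)) (cardD1 (1:F)) !inE oner_neq0. Qed.

End Count.

Lemma conv_coord (R : realType) (N : nat) (w a : 'I_N -> R) (lo hi : R) :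
  (forall j, 0 <= w j) -> \sum_j w j = 1 -> (forall j, lo <= a j <= hi) ->
  lo <= \sum_j w j * a j <= hi.
Proof.
move=> w0 w1 ha; apply/andP; split.
  have -> : lo = \sum_j w j * lo by rewrite -mulr_suml w1 mul1r.
  by apply: ler_sum => j _; apply: ler_wpM2l => //; case/andP: (ha j).
have -> : hi = \sum_j w j * hi by rewrite -mulr_suml w1 mul1r.
by apply: ler_sum => j _; apply: ler_wpM2l => //; case/andP: (ha j).
Qed.

Section Geo.
Variables (R : realType) (q n : nat) (P : ipolytope n).
Hypothesis hb : in_box q P.

Lemma box_of_inP (e : 'rV[int]_n) : inP P (intvR R e) ->
  forall m, (0 <= e ord0 m <= q%:Z - 2)%R.
Proof.
case: hb => _ hv [w [w0 w1 he]] m.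
have := congr1 (fun A : 'rV[R]_n => A ord0 m) he.
rewrite /intvR mxE summxE => hm.
have : (((0 : int)%:~R : R) <= (e ord0 m)%:~R <= ((q%:Z - 2)%:~R : R)).
  rewrite hm; under eq_bigr do rewrite mxE.
  apply: conv_coord => // j.
  have jlt : (j < size (verts P))%N by move: (ltn_ord j); rewrite {2}size_map.
  rewrite (nth_map 0) // mxE ler_int ler_int; apply: hv; exact: mem_nth.
by rewrite ler_int ler_int.
Qed.
End Geo.

Lemma prodXz (F : fieldType) (I : finType) (a : I -> F) (z : int) :
  (\prod_i a i) ^ z = \prod_i a i ^ z.
Proof. by elim/big_rec2: _ => [|i x y _ <-]; rewrite ?exp1rz ?expfzMl. Qed.

Lemma expz_sum (F : fieldType) (x : F) (I : finType) (z : I -> int) :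
  x != 0 -> x ^ (\sum_i z i) = \prod_i x ^ z i.
Proof. by move=> hx; elim/big_rec2: _ => [|i m y _ <-]; rewrite ?expr0z ?expfzDr. Qed.

Section Main.
Variables (R : realType) (F : finFieldType) (n : nat) (P : ipolytope n) (k : nat).
Local Notation q := #|F|.
Hypothesis hb : in_box q P.
Variables (M : 'M[int]_n) (lam : 'rV[int]_n).
Hypothesis hM : M \in unitmx.
Hypothesis hkn : (k <= n)%N.
Hypothesis hcube : forall x : 'rV[R]_n, (forall j, 0 <= x ord0 j <= 1) ->
  (forall j : 'I_n, (k <= j)%N -> x ord0 j = 0) -> inP P (x *m intmR R M + intvR R lam).

Lemma q1_gt0 : (0 < q.-1)%N.
Proof. have := q_gt1 F; lia. Qed.

Definition d0 : 'I_q.-1 := Ordinal q1_gt0.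
Definition toI (e : 'rV[int]_n) : 'rV['I_q.-1]_n := \row_j insubd d0 `|e ord0 j|%N.
Definition inbox (e : 'rV[int]_n) := forall m, (0 <= e ord0 m <= q%:Z - 2)%R.

Lemma toI_val (e : 'rV[int]_n) (j : 'I_n) : (0 <= e ord0 j <= q%:Z - 2)%R -> (toI e ord0 j : nat) = `|e ord0 j|%N.
Proof.
rewrite mxE val_insubd; case: (e ord0 j) => [m|m] //= h.
have := q_gt1 F; case: ifP => // /negP; lia.
Qed.

Lemma expR_toI (e : 'rV[int]_n) : inbox e -> Defs.expR R (toI e) = intvR R e.
Proof.
move=> he; apply/rowP => j; have := toI_val _ _ (he j); rewrite !mxE => ->.
by case: (e ord0 j) (he j).
Qed.

Definition xf (f : {ffun 'I_n -> bool}) : 'rV[int]_n := \row_j ((f j : nat) : int).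
Definition Af f := xf f *m M + lam.
Definition valid (f : {ffun 'I_n -> bool}) := [forall j : 'I_n, (k <= j)%N ==> ~~ f j].

Lemma valid_inP f : valid f -> inP P (intvR R (Af f)).
Proof.
move=> /forallP hv.
have := hcube (intvR R (xf f)).
have -> : intvR R (xf f) *m intmR R M + intvR R lam = intvR R (Af f).
  apply/rowP => m; rewrite !mxE intrD rmorph_sum /=; congr (_ + _).
  by apply: eq_bigr => j _; rewrite !mxE intrM.
apply.
  move=> j; rewrite !mxE; case: (f j) => /=; rewrite ?lexx ?ler01 // ?ler0n.
move=> j hj; rewrite !mxE; have := hv j; rewrite hj /=; by case: (f j).
Qed.

Lemma valid_box f : valid f -> inbox (Af f).
Proof. by move=> hv; apply: (@box_of_inP R q n P hb); apply: valid_inP. Qed.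

Lemma valid_lat f : valid f -> toI (Af f) \in latpts R F P.
Proof.
move=> hv; rewrite inE; apply/asboolP; rewrite expR_toI; last exact: valid_box.
exact: valid_inP.
Qed.


Definition sgn (f : {ffun 'I_n -> bool}) : F :=
  \prod_(j : 'I_n) (if (j < k)%N then (if f j then 1 else -1) else (if f j then 0 else 1)).

Lemma sgn_valid f : sgn f != 0 -> valid f.
Proof.
move=> h; apply/forallP => j; apply/implyP => hj; apply/negP => fj.
by move: h; rewrite /sgn (bigD1 j) //= ltnNge hj fj /= mul0r eqxx.
Qed.

Definition c : {ffun 'rV['I_q.-1]_n -> F} := [ffun e => \sum_(f | toI (Af f) == e) sgn f].

Lemma c_inLP : inLP R P c.
Proof.
apply/forallP => e; apply/implyP => he; rewrite ffunE; apply/eqP; apply: big1 => f /eqP hfe.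
case: (eqVneq (sgn f) 0) => // /sgn_valid /valid_lat; by rewrite hfe (negbTE he).
Qed.

Definition f0 : {ffun 'I_n -> bool} := [ffun _ => false].

Lemma valid_f0 : valid f0.
Proof. by apply/forallP => j; rewrite ffunE implybT. Qed.

Lemma Af_inj f g : valid f -> valid g -> toI (Af f) = toI (Af g) -> f = g.
Proof.
move=> vf vg h.
have hA : Af f = Af g.
  apply/rowP => j; have := congr1 (fun e : 'rV['I_q.-1]_n => (e ord0 j : nat)) h => /=.
  rewrite (toI_val _ _ (valid_box _ vf j)) (toI_val _ _ (valid_box _ vg j)).
  move: (valid_box _ vf j) (valid_box _ vg j).
  by case: (Af f ord0 j) => [a|a] // ; case: (Af g ord0 j) => [b|b] // _ _ /= ->.
have hx : xf f = xf g.
  move: hA; rewrite /Af => /addIr h2.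
  by rewrite -(mulmxK hM (xf f)) h2 mulmxK.
apply/ffunP => j; have := congr1 (fun x : 'rV[int]_n => x ord0 j) hx.
rewrite /xf !mxE; by case: (f j); case: (g j).
Qed.

Lemma sgn_f0 : sgn f0 != 0.
Proof.
apply/prodf_neq0 => j _; rewrite ffunE; case: ifP => _ //.
  by rewrite oppr_eq0 oner_neq0.
by rewrite oner_neq0.
Qed.

Lemma c_neq0 : c != 0.
Proof.
apply/eqP => h0; have := congr1 (fun c' : {ffun 'rV['I_q.-1]_n -> F} => c' (toI (Af f0))) h0.
rewrite !ffunE /= (bigD1 f0) //= big1 ?addr0.
  by move=> h; move: sgn_f0; rewrite h eqxx.
move=> f /andP[/eqP hf nf]; case: (eqVneq (sgn f) 0) => // /sgn_valid vf.
by move: nf; rewrite (Af_inj _ _ vf valid_f0 hf) eqxx.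
Qed.

Definition torus (t : 'rV[F]_n) := [forall j, t ord0 j != 0].
Definition mono (e : 'rV['I_q.-1]_n) (t : 'rV[F]_n) := \prod_(j < n) t ord0 j ^+ (e ord0 j : nat).
Definition u (t : 'rV[F]_n) : 'rV[F]_n := \row_j \prod_m t ord0 m ^ (M j m).
Definition Tlam (t : 'rV[F]_n) := \prod_m t ord0 m ^ (lam ord0 m).

Lemma mono_Af f t : torus t -> valid f ->
  mono (toI (Af f)) t = Tlam t * \prod_j (if f j then u t ord0 j else 1).
Proof.
move=> /forallP ht vf; rewrite /mono.
have e1 : forall m, t ord0 m ^+ (toI (Af f) ord0 m : nat) = t ord0 m ^ (Af f ord0 m).
  move=> m; rewrite (toI_val _ _ (valid_box _ vf m)).
  by case: (Af f ord0 m) (valid_box _ vf m).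
rewrite (eq_bigr _ (fun m _ => e1 m)).
rewrite /Af /Tlam.
under eq_bigr do rewrite mxE addrC (expfzDr _ _ (ht _)) mxE (expz_sum _ _ _ _ (ht _)).
rewrite big_split /=; congr (_ * _).
rewrite exchange_big /=; apply: eq_bigr => j _; rewrite !mxE.
case: (f j) => /=.
  by apply: eq_bigr => m _; rewrite mul1r.
by apply: big1 => m _; rewrite mul0r expr0z.
Qed.

Definition G (t : 'rV[F]_n) (j : 'I_n) (b : bool) : F :=
  if (j < k)%N then (if b then u t ord0 j else -1) else (if b then 0 else 1).

Lemma sgn_prod f t :
  sgn f * \prod_j (if f j then u t ord0 j else 1) = \prod_j G t j (f j).
Proof.
rewrite /sgn -big_split; apply: eq_bigr => j _; rewrite /G.
by case: ifP; case: (f j); rewrite /= ?mul1r ?mulr1 ?mul0r ?mulN1r.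
Qed.

Lemma eval_c t : torus t ->
  evalc R P c t = Tlam t * \prod_(j < n) (if (j < k)%N then u t ord0 j - 1 else 1).
Proof.
move=> ht; rewrite /evalc.
under eq_bigr do rewrite ffunE mulr_suml.
have -> : \sum_(e in latpts R F P) \sum_(f | toI (Af f) == e) sgn f * \prod_(j < n) t ord0 j ^+ (e ord0 j : nat)
   = \sum_(f | toI (Af f) \in latpts R F P) sgn f * mono (toI (Af f)) t.
  rewrite [RHS](partition_big (fun f => toI (Af f)) (mem (latpts R F P))) //=.
  apply: eq_bigr => e he; apply: eq_big => f.
    by case: (eqVneq (toI (Af f)) e) => [->|_]; rewrite ?he ?andbF ?eqxx.
  by move=> /eqP ->.
rewrite big_mkcond /=.
transitivity (\sum_(f : {ffun 'I_n -> bool}) Tlam t * \prod_j G t j (f j)).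
  apply: eq_bigr => f _; rewrite -sgn_prod.
  case: (eqVneq (sgn f) 0) => hs.
    by rewrite hs !mul0r mulr0; case: ifP.
  have vf := sgn_valid _ hs.
  by rewrite (valid_lat _ vf) (mono_Af _ _ ht vf) mulrCA.
rewrite -mulr_sumr; congr (_ * _).
rewrite -(bigA_distr_bigA (fun j b => G t j b)).
apply: eq_bigr => j _; rewrite big_bool /G.
by case: ifP => _ /=; rewrite ?add0r.
Qed.

Lemma u_inv t l : torus t -> \prod_j (u t ord0 j) ^ (invmx M l j) = t ord0 l.
Proof.
move=> /forallP ht.
under eq_bigr do rewrite mxE prodXz.
under eq_bigr do under eq_bigr do rewrite exprz_exp.
rewrite exchange_big /=.
under eq_bigr => m _ do rewrite -(expz_sum _ _ _ _ (ht m)).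
have hN : forall m, \sum_j M j m * invmx M l j = (1%:M : 'M[int]_n) l m.
  move=> m; rewrite -(mulVmx hM) mxE; apply: eq_bigr => j _; exact: mulrC.
under eq_bigr do rewrite hN.
rewrite (bigD1 l) //= mxE eqxx /= expr1z big1 ?mulr1 // => m hm.
by rewrite mxE eq_sym (negbTE hm) /= expr0z.
Qed.

Lemma u_torus t : torus t -> torus (u t).
Proof.
move=> /forallP ht; apply/forallP => j; rewrite mxE; apply/prodf_neq0 => m _.
exact: expfz_neq0.
Qed.

Definition S (j : 'I_n) : pred F :=
  if (j < k)%N then [pred y : F | (y != 0) && (y != 1)] else [pred y : F | y != 0].

Lemma card_T0 : #|[set t : 'rV[F]_n | torus t]| = (q.-1 ^ n)%N.
Proof.
have -> : [set t : 'rV[F]_n | torus t] = [set t : 'rV[F]_n | [forall j, t ord0 j \in [pred y : F | y != 0]]].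
  by apply/finset.setP => t; rewrite !inE.
rewrite card_rowbox (eq_bigr (fun j : 'I_n => if (j < 0)%N then 0%N else q.-1)).
  by rewrite (prod_if n 0 0 q.-1) min0n subn0 expn0 mul1n.
by move=> j _; rewrite card_nz.
Qed.

Lemma card_B : #|[set t : 'rV[F]_n | [forall j, t ord0 j \in S j]]| = ((q - 2) ^ k * q.-1 ^ (n - k))%N.
Proof.
rewrite card_rowbox (eq_bigr (fun j : 'I_n => if (j < k)%N then (q - 2)%N else q.-1)).
  by rewrite prod_if (minn_idPl hkn).
by move=> j _; rewrite /S; case: ifP => _; rewrite ?card_nz ?card_nz1.
Qed.

Lemma Zcount_ge : (q.-1 ^ n - (q - 2) ^ k * q.-1 ^ (n - k) <= Zcount R P c)%N.
Proof.
set E := [set t : 'rV[F]_n | evalc R P c t == 0].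
set T0 := [set t : 'rV[F]_n | torus t].
have hZ : [set t : 'rV[F]_n | [forall j, t ord0 j != 0] & evalc R P c t == 0] = T0 :&: E.
  by apply/finset.setP => t; rewrite !inE andbC.
have hcard := cardsID E T0.
have hinj : {in T0 :\: E &, injective u}.
  move=> t1 t2; rewrite !inE => /andP[_ h1] /andP[_ h2] he.
  apply/rowP => l; rewrite -(u_inv _ l h1) -(u_inv _ l h2) he.

  by [].
have hsub : u @: (T0 :\: E) \subset [set t : 'rV[F]_n | [forall j, t ord0 j \in S j]].
  apply/fintype.subsetP => y /finset.imsetP [t ht ->]; move: ht; rewrite !inE => /andP[hE hT].
  have hu := u_torus _ hT; move/forallP: hu => hu.
  apply/forallP => j; rewrite /S; case: ifP => hj; rewrite !inE hu //=.
  apply/eqP => h1; move: hE; rewrite eval_c // (bigD1 j) //= hj h1 subrr mul0r mulr0 eqxx.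
  by [].
have := subset_leq_card hsub; rewrite card_in_imset // card_B => hle.
rewrite /Zcount hZ; move: hcard; rewrite card_T0; lia.
Qed.

Lemma Nmax_ge : (q.-1 ^ n - (q - 2) ^ k * q.-1 ^ (n - k) <= Nmax R F P)%N.
Proof.
apply: leq_trans Zcount_ge _.
by apply: (leq_bigmax_cond (F := fun c' => Zcount R P c')); rewrite c_inLP c_neq0.
Qed.
End Main.

Lemma real_bound (R : realType) (Q A N n k : nat) : (0 < Q)%N -> (k <= n)%N ->
  (Q ^ n - A ^ k * Q ^ (n - k) <= N)%N ->
  ((Q ^ n)%:R - N%:R) / (Q ^ n)%:R <= ((A%:R / Q%:R) ^+ k : R).
Proof.
move=> hQ hk; rewrite leq_subLR => h.
have hQR : (0 : R) < Q%:R by rewrite ltr0n.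
have hQn : (0 : R) < (Q ^ n)%:R by rewrite ltr0n expn_gt0 hQ.
rewrite ler_pdivrMr //.
have -> : (A%:R / Q%:R) ^+ k * (Q ^ n)%:R = ((A ^ k * Q ^ (n - k))%N%:R : R).
  rewrite -(subnKC hk) expnD natrM natrM !natrX expr_div_n.
  rewrite subnKC // mulrA divfK //.
  by rewrite expf_neq0 // gt_eqF.
rewrite lerBlDr -natrD ler_nat; lia.
Qed.

Lemma key (R : realType) (F : finFieldType) n (P : ipolytope n) k : in_box #|F| P -> hasCube R P k ->
  delta R F P <= ((#|F| - 2)%:R / (#|F|.-1)%:R) ^+ k.
Proof.
move=> hb [hkn [M [lam [hM hc]]]].
have h := @Nmax_ge R F n P k hb M lam hM hkn hc.
rewrite /delta; apply: real_bound => //.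
have := q_gt1 F. lia.
Qed.

Lemma delta_le1 (R : realType) (F : finFieldType) n (P : ipolytope n) : delta R F P <= 1.
Proof.
have hq : (0 < #|F|.-1)%N by have := q_gt1 F; lia.
have hQn : (0 : R) < ((#|F|.-1) ^ n)%:R by rewrite ltr0n expn_gt0 hq.
rewrite /delta ler_pdivrMr // mul1r lerBlDr lerDl ler0n //.
Qed.

Lemma Mdim_cube (R : realType) n (P : ipolytope n) : Mdim R P = 0%N \/ hasCube R P (Mdim R P).
Proof.
rewrite /Mdim.
have : (\max_(i < n.+1 | `[< hasCube R P i >]) i = 0 \/
   exists2 i : 'I_n.+1, `[< hasCube R P i >] & \max_(i < n.+1 | `[< hasCube R P i >]) i = i)%N.
  apply: (big_ind (fun m => m = 0 \/ exists2 i : 'I_n.+1, `[< hasCube R P i >] & m = i)%N).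
  - by left.
  - by move=> x y hx hy; case: (leqP x y).
  - by move=> i hi; right; exists i.
case=> [->|[i /asboolP hi ->]]; [by left | by right].
Qed.

Local Open Scope classical_set_scope.

Definition rho (R : realType) (F : finFieldType) : R := (#|F| - 2)%:R / (#|F|.-1)%:R.

Lemma rho_ge0 (R : realType) (F : finFieldType) : 0 <= rho R F.
Proof. by rewrite /rho divr_ge0. Qed.

Lemma rho_lt1 (R : realType) (F : finFieldType) : rho R F < 1.
Proof.
have q2 : (1 < #|F|)%N.
  by rewrite (cardD1 (0:F)) (cardD1 (1:F)) !inE oner_neq0.
rewrite /rho ltr_pdivrMr ?mul1r ?ltr_nat; [lia| ].
by rewrite ltr0n; lia.
Qed.




Lemma delta_Mdim (R : realType) (F : finFieldType) n (P : ipolytope n) : in_box #|F| P ->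
  delta R F P <= rho R F ^+ (Mdim R P).
Proof.
move=> hb; case: (@Mdim_cube R n P) => [->|h]; last exact: key.
by rewrite expr0 delta_le1.
Qed.

Lemma aux {R : realType} {d a b : R} : 0 < d -> b < d/2 -> a <= b -> d - a < d/2 -> False.
Proof. move=> *; lra. Qed.

Theorem mainTheorem12 (R : realType) (F : finFieldType) (n : nat -> nat)
    (P : forall i, ipolytope (n i)) :
  toricFamily R F P ->
  (forall K : nat, exists i : nat, (K <= Mdim R (P i))%N) ->
  (fun i => delta R F (P i)) @ \oo --> (0 : R).
Proof.
move=> [hbox _ [d [r [/andP[d0 d1] _ hd _]]]] hM.
suff dz : d = 0 by rewrite -dz.
apply/eqP; rewrite eq_le d0 andbT; rewrite leNgt; apply/negP => dp.
have [N _ HN] := (proj1 (cvgrPdist_lt _ _) hd (d/2) ltac:(by rewrite divr_gt0)).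
have hr : `|rho R F| < 1 by rewrite ger0_norm ?rho_lt1 ?rho_ge0.
have [K _ HK] := (proj1 (cvgrPdist_lt _ _) (cvg_expr hr) (d/2) ltac:(by rewrite divr_gt0)).
set B := (\max_(i < N) Mdim R (P i))%N.
have [i Hi] := hM (maxn K (B.+1)).
have iN : (N <= i)%N.
  rewrite leqNgt; apply/negP => iN.
  have : (Mdim R (P i) <= B)%N by apply: (@leq_bigmax _ (fun j : 'I_N => Mdim R (P j)) (Ordinal iN)).
  move: Hi; rewrite geq_max => /andP[_]; lia.
have h1 := HN i iN. rewrite /= in h1.
have h2 := HK (Mdim R (P i)) ltac:(move: Hi; rewrite geq_max => /andP[]//).
rewrite /= sub0r normrN ger0_norm ?exprn_ge0 ?rho_ge0 // in h2.
have h3 := @delta_Mdim R F _ _ (hbox i).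
have h4 : d - delta R F (P i) < d / 2 by apply: le_lt_trans h1; exact: ler_norm.
exact: (aux dp h2 h3 h4).
Qed.
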